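(* Let $T^\ast$ be the minimal matrix representation of a $0/1$-triangle $\mathcal{T}$ in $[0,1]^n$, written (as is always possible) with nonnegative integers $a,b,c,d$, $a+b+c+d=n$, such that the first $a$ rows of $T^\ast$ are $(0,1,1)$, the next $b$ rows $(0,1,0)$, the next $c$ rows $(0,0,1)$ and the last $d$ rows $(0,0,0)$, where $1\le a+b$, $a\le b\le c$. Then: if $a=0$, $\mathcal{T}$ is a right triangle; if $a>0$, $\mathcal{T}$ has acute angles only.
   Context: A $0/1$-triangle in $[0,1]^n$ is the convex hull of three distinct points of $\{0,1\}^n$. Column number of $x\in\{0,1\}^n$: $(2^0,\dots,2^{n-1})x$. For an $n\times k$ $0/1$-matrix $P$ with distinct columns, $\nu(P)$ is the increasingly sorted vector of its column numbers. $P$ is a minimal matrix representation if its column numbers are strictly increasing left to right and $\nu(P)\preceq\nu(Q)$ lexicographically for every $Q$ obtained from $P$ by complementing some subset of its rows and then permuting its rows. *)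

(* Defs.v *)
From mathcomp Require Import all_boot all_order all_algebra perm.
Set Implicit Arguments. Unset Strict Implicit. Unset Printing Implicit Defensive.

(* Points of {0,1}^n are finite functions 'I_n -> bool (true = 1). *)
Definition pt (n : nat) := {ffun 'I_n -> bool}.

Definition colnum (n k : nat) (P : 'M[bool]_(n, k)) (j : 'I_k) : nat :=
  \sum_(i < n) 2 ^ i * P i j.

Definition nu (n k : nat) (P : 'M[bool]_(n, k)) : seq nat :=
  sort leq [seq colnum P j | j <- enum 'I_k].

Fixpoint lexle (s t : seq nat) : bool :=
  match s, t with
  | [::], _ => true
  | _ :: _, [::] => false
  | x :: s', y :: t' => (x < y) || ((x == y) && lexle s' t')
  end.

Definition rowop (n k : nat) (s : {perm 'I_n}) (f : 'I_n -> bool)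
  (P : 'M[bool]_(n, k)) : 'M[bool]_(n, k) :=
  \matrix_(i, j) xorb (P (s i) j) (f (s i)).

Definition minimal_rep (n k : nat) (P : 'M[bool]_(n, k)) : Prop :=
  (forall j1 j2 : 'I_k, j1 < j2 -> colnum P j1 < colnum P j2) /\
  (forall (s : {perm 'I_n}) (f : 'I_n -> bool), lexle (nu P) (nu (rowop s f P))).

Definition col_pt (n k : nat) (P : 'M[bool]_(n, k)) (j : 'I_k) : pt n :=
  [ffun i => P i j].

Definition cube_map (n : nat) (s : {perm 'I_n}) (f : 'I_n -> bool) (x : pt n) : pt n :=
  [ffun i => xorb (x (s i)) (f (s i))].

(* P is a minimal matrix representation of the triangle conv{x,y,z}:
   P is minimal and its columns are (in some order) the images of the vertices
   under one row-complementation/row-permutation. *)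
Definition min_rep_of (n : nat) (P : 'M[bool]_(n, 3)) (x y z : pt n) : Prop :=
  minimal_rep P /\
  exists (s : {perm 'I_n}) (f : 'I_n -> bool),
    perm_eq [:: col_pt P (@Ordinal 3 0 isT); col_pt P (@Ordinal 3 1 isT);
                col_pt P (@Ordinal 3 2 isT)]
            [:: cube_map s f x; cube_map s f y; cube_map s f z].

Definition dotd (n : nat) (w u v : pt n) : int :=
  (\sum_(i < n) ((u i)%:Z - (w i)%:Z) * ((v i)%:Z - (w i)%:Z))%R.

(* Angle at vertex w of the triangle with other vertices u, v is right iff the
   inner product of the edge vectors is 0, acute iff it is positive. *)
Definition right_triangle (n : nat) (x y z : pt n) : Prop :=
  dotd x y z = 0%R \/ dotd y x z = 0%R \/ dotd z x y = 0%R.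

Definition acute_triangle (n : nat) (x y z : pt n) : Prop :=
  (0 < dotd x y z)%R /\ (0 < dotd y x z)%R /\ (0 < dotd z x y)%R.

Definition row_pattern (n : nat) (P : 'M[bool]_(n, 3)) (a b c : nat) : Prop :=
  forall (i : 'I_n) (j : 'I_3),
    P i j = if i < a then (j != 0 :> nat)
            else if i < a + b then (j == 1 :> nat)
            else if i < a + b + c then (j == 2 :> nat)
            else false.

(* Main.v *)
Require Import Defs.
From mathcomp Require Import all_boot all_order all_algebra perm zify.
Import GRing.Theory Num.Theory.

Lemma perm2 (T : eqType) (q r v w : T) : perm_eq [:: v; w] [:: q; r] ->
  (v = q /\ w = r) \/ (v = r /\ w = q).
Proof.
move=> H.
have : v \in [:: q; r] by rewrite -(perm_mem H) mem_head.
rewrite !inE => /orP[/eqP Ev|/eqP Ev]; subst v.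
- left; split=> //. move: H; rewrite perm_cons => /perm_small_eq E.
  by case: (E isT).
- right; split=> //.
  have H2 : perm_eq [:: r; w] [:: r; q].
    by apply: (perm_trans H); rewrite (perm_catC [:: q] [:: r]).
  by move: H2; rewrite perm_cons => /perm_small_eq E; case: (E isT).
Qed.

Lemma perm3 (T : eqType) (p q r u v w : T) : perm_eq [:: p; q; r] [:: u; v; w] ->
  (u, v, w) = (p, q, r) \/ (u, v, w) = (p, r, q) \/ (u, v, w) = (q, p, r) \/
      (u, v, w) = (q, r, p) \/ (u, v, w) = (r, p, q) \/ (u, v, w) = (r, q, p).
Proof.
move=> H0; have H := H0; rewrite perm_sym in H.
have : u \in [:: p; q; r] by rewrite -(perm_mem H) mem_head.
move=> /perm_to_rem R.
have H1 : perm_eq [:: v; w] (rem u [:: p; q; r]).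
  by rewrite -(perm_cons u); apply: (perm_trans H).
move: H1 (perm_mem H0) => /=.
case: (eqVneq p u) => [->|npu] /=.
  by move/perm2 => [[-> ->]|[-> ->]]; [left|right;left].
case: (eqVneq q u) => [->|nqu] /=.
  by move/perm2 => [[-> ->]|[-> ->]]; [do 2 right; left|do 3 right; left].
case: (eqVneq r u) => [->|nru] /=.
  by move/perm2 => [[-> ->]|[-> ->]]; [do 4 right; left|do 5 right].
move=> _ M; have := M u; rewrite !inE eqxx /= => /esym.
by rewrite eq_sym (negbTE npu) eq_sym (negbTE nqu) eq_sym (negbTE nru).
Qed.

Lemma dotd_cube n (s : {perm 'I_n}) f (w u v : pt n) :
  dotd (cube_map s f w) (cube_map s f u) (cube_map s f v) = dotd w u v.
Proof.
rewrite /dotd.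
rewrite (reindex_inj (@perm_inj _ s^-1)) /=.
apply: eq_bigr => i _; rewrite !ffunE permKV.
by case: (f i); case: (u i); case: (v i); case: (w i).
Qed.

Lemma dotdC n (w u v : pt n) : dotd w u v = dotd w v u.
Proof. by rewrite /dotd; apply: eq_bigr => i _; rewrite GRing.mulrC. Qed.

Lemma sum_lt n a : (\sum_(i < n) ((i < a) : nat) = minn a n)%N.
Proof.
elim: n => [|n IH]; first by rewrite big_ord0; lia.
rewrite big_ord_recr /= IH; case: ltnP => h /=; lia.
Qed.

Lemma sum_ind n A1 A2 (F : 'I_n -> int) :
  (forall i : 'I_n, F i = ((i < A2)%N : nat)%:Z - ((i < A1)%N : nat)%:Z)%R ->
  (\sum_i F i = (minn A2 n)%:Z - (minn A1 n)%:Z)%R.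
Proof.
move=> H; rewrite (eq_bigr _ (fun i _ => H i)) sumrB -!sum_lt.
by rewrite !(big_morph Posz PoszD (erefl _)).
Qed.

Section Cols.
Variables (n a b c d : nat) (P : 'M[bool]_(n, 3)).
Hypothesis hn : a + b + c + d = n.
Hypothesis hp : row_pattern P a b c.
Let C0 := col_pt P (@Ordinal 3 0 isT).
Let C1 := col_pt P (@Ordinal 3 1 isT).
Let C2 := col_pt P (@Ordinal 3 2 isT).

Ltac tcase i := rewrite /dotd; first [apply: sum_ind => i; rewrite !ffunE !hp /=;
   case: (ltnP i a) => h1; case: (ltnP i (a+b)) => h2; case: (ltnP i (a+b+c)) => h3;
   rewrite /= ?subr0 //; lia].

Lemma dot0 : dotd C0 C1 C2 = Posz a.
Proof.
have -> : Posz a = (Posz (minn a n) - Posz (minn 0 n))%R.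
  by rewrite (_ : minn 0 n = 0%N) ?subr0; [congr Posz|]; lia.
rewrite /dotd; apply: sum_ind => i; rewrite !ffunE !hp /=.
by case: (ltnP i a) => h1; case: (ltnP i (a+b)) => h2; case: (ltnP i (a+b+c)) => h3; rewrite /=; lia.
Qed.

Lemma dot1 : dotd C1 C0 C2 = Posz b.
Proof.
have -> : Posz b = (Posz (minn (a+b) n) - Posz (minn a n))%R.
  by lia.
rewrite /dotd; apply: sum_ind => i; rewrite !ffunE !hp /=.
by case: (ltnP i a) => h1; case: (ltnP i (a+b)) => h2; case: (ltnP i (a+b+c)) => h3; rewrite /=; lia.
Qed.

Lemma dot2 : dotd C2 C0 C1 = Posz c.
Proof.
have -> : Posz c = (Posz (minn (a+b+c) n) - Posz (minn (a+b) n))%R.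
  by lia.
rewrite /dotd; apply: sum_ind => i; rewrite !ffunE !hp /=.
by case: (ltnP i a) => h1; case: (ltnP i (a+b)) => h2; case: (ltnP i (a+b+c)) => h3; rewrite /=; lia.
Qed.
End Cols.

Theorem corollary4p16 (n : nat) (x y z : pt n) (Tstar : 'M[bool]_(n, 3))
  (a b c d : nat) :
  x != y -> x != z -> y != z ->
  min_rep_of Tstar x y z ->
  a + b + c + d = n ->
  row_pattern Tstar a b c ->
  1 <= a + b -> a <= b -> b <= c ->
  (a = 0 -> right_triangle x y z) /\ (0 < a -> acute_triangle x y z).
Proof.
move=> _ _ _ [_ [s [f Hp]]] hn hp hab hab2 hbc.
have d0 := @dot0 n a b c d Tstar hn hp; have d1 := @dot1 n a b c d Tstar hn hp; have d2 := @dot2 n a b c d Tstar hn hp.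
rewrite dotdC in d0; have d0' := @dot0 n a b c d Tstar hn hp.
rewrite dotdC in d1; have d1' := @dot1 n a b c d Tstar hn hp.
rewrite dotdC in d2; have d2' := @dot2 n a b c d Tstar hn hp.
rewrite /right_triangle /acute_triangle -(dotd_cube _ s f x y z) -(dotd_cube _ s f y x z) -(dotd_cube _ s f z x y).
have [E|[E|[E|[E|[E|E]]]]] := perm3 _ _ _ _ _ _ _ Hp; case: E => -> -> ->;
  rewrite ?d0 ?d1 ?d2 ?d0' ?d1' ?d2'; split => ha; lia.
Qed.
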